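(* Suppose the family of update functions $\mathrm{Upd}$ satisfies P2. Let $\mathcal{M}=(W,\mathcal{F})$ be a measure space, $\Pr\in\Delta_{\mathcal{M}}$ and $B\in\mathcal{F}$ with $\mathrm{Upd}^{\mathcal{M}}(\Pr,B)=\emptyset$ and $\Pr(B)=\alpha<1$. Then for every measure space $\mathcal{M}'=(W',\mathcal{F}')$, every $\Pr'\in\Delta_{\mathcal{M}'}$ and every $B'\in\mathcal{F}'$ with $\Pr'(B')=\alpha$, we have $\mathrm{Upd}^{\mathcal{M}'}(\Pr',B')=\emptyset$.
   Context: A measure space is a pair $\mathcal{M}=(W,\mathcal{F})$ with $\mathcal{F}$ an algebra of subsets of $W$; $\Delta_{\mathcal{M}}$ is the set of all probability measures on $\mathcal{M}$. An update function on $\mathcal{M}$ is a map $\mathrm{Upd}^{\mathcal{M}}:2^{\Delta_{\mathcal{M}}}\times\mathcal{F}\to 2^{\Delta_{\mathcal{M}}}$ such that $\mathrm{Upd}^{\mathcal{M}}(X,B)=\emptyset$ whenever $\Pr(B)=0$ for all $\Pr\in X$; $\mathrm{Upd}^{\mathcal{M}}(\Pr,B)$ means $\mathrm{Upd}^{\mathcal{M}}(\{\Pr\},B)$. A family $\mathrm{Upd}=\{\mathrm{Upd}^{\mathcal{M}}\}$ has one update function for each measure space. A representation shift from $\mathcal{M}=(W,\mathcal{F})$ to $\mathcal{M}'=(W',\mathcal{F}')$ is a surjection $f:W\to W'$ with $f^{-1}(B)\in\mathcal{F}$ for all $B\in\mathcal{F}'$; $(f^*(\Pr))(A)=\Pr(f^{-1}(A))$,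 $f^*(X)=\{f^*(\Pr):\Pr\in X\}$. P2: for all measure spaces $\mathcal{M},\mathcal{M}'$, every representation shift $f$ from $\mathcal{M}$ to $\mathcal{M}'$, every $X\subseteq\Delta_{\mathcal{M}}$ and $B\in\mathcal{F}'$: $\mathrm{Upd}^{\mathcal{M}'}(f^*(X),B)=f^*(\mathrm{Upd}^{\mathcal{M}}(X,f^{-1}(B)))$. *)

(* Defs.v *)
From Stdlib Require Import Reals Lra Classical ClassicalEpsilon.
Open Scope R_scope.
Set Implicit Arguments.

Record MSpace := {
  carrier :> Type;
  meas : (carrier -> Prop) -> Prop;
  meas_T : meas (fun _ => True);
  meas_C : forall A, meas A -> meas (fun w => ~ A w);
  meas_U : forall A B, meas A -> meas B -> meas (fun w => A w \/ B w)
}.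

(* A (finitely additive) probability measure on the algebra; it is
   represented as a function on all subsets that is 0 outside F, so that
   measures are determined by their values on F. *)
Record prob (M : MSpace) := {
  pr :> (carrier M -> Prop) -> R;
  pr_out : forall A, ~ meas M A -> pr A = 0;
  pr_ge0 : forall A, meas M A -> 0 <= pr A;
  pr_T : pr (fun _ => True) = 1;
  pr_add : forall A B, meas M A -> meas M B ->
     (forall w, A w -> B w -> False) -> pr (fun w => A w \/ B w) = pr A + pr B
}.

(* A family of maps 2^{Delta_M} x F -> 2^{Delta_M}, one per measure space
   (values on non-measurable B are irrelevant). *)
Definition UpdFamily := forall M : MSpace, (prob M -> Prop) -> (carrier M -> Prop) -> (prob M -> Prop).

Definition set_empty {T} (X : T -> Prop) : Prop := forall x, ~ X x.
Definition set_eq {T} (X Y : T -> Prop) : Prop := forall x, X x <-> Y x.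
Definition single {T} (x : T) : T -> Prop := fun y => y = x.

Definition is_update_family (Upd : UpdFamily) : Prop :=
  forall (M : MSpace) (X : prob M -> Prop) (B : carrier M -> Prop), meas M B ->
    (forall P, X P -> pr P B = 0) -> set_empty (Upd M X B).

Definition preim {W W' : Type} (f : W -> W') (B : W' -> Prop) : W -> Prop :=
  fun w => B (f w).



Section Push.
Variables (M M' : MSpace) (f : carrier M -> carrier M')
  (hf : forall B, meas M' B -> meas M (preim f B)) (P : prob M).

Definition push_fun (A : carrier M' -> Prop) : R :=
  if excluded_middle_informative (meas M' A) then pr P (preim f A) else 0.

Lemma push_out : forall A, ~ meas M' A -> push_fun A = 0.
Proof. intros A h; unfold push_fun; destruct excluded_middle_informative; tauto. Qed.

Lemma push_ge0 : forall A, meas M' A -> 0 <= push_fun A.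
Proof. intros A h; unfold push_fun; destruct excluded_middle_informative.
  apply pr_ge0, hf; auto. lra. Qed.

Lemma push_T : push_fun (fun _ => True) = 1.
Proof. unfold push_fun; destruct excluded_middle_informative.
  apply (pr_T P). exfalso; apply n, meas_T. Qed.

Lemma push_add : forall A B, meas M' A -> meas M' B ->
  (forall w, A w -> B w -> False) ->
  push_fun (fun w => A w \/ B w) = push_fun A + push_fun B.
Proof. intros A B hA hB hd; unfold push_fun.
  destruct (excluded_middle_informative (meas M' (fun w => A w \/ B w))) as [h|h];
  [| exfalso; apply h, meas_U; auto].
  destruct (excluded_middle_informative (meas M' A)); [|tauto].
  destruct (excluded_middle_informative (meas M' B)); [|tauto].
  apply (pr_add P (preim f A) (preim f B)); try apply hf; auto.
  intros w; apply hd. Qed.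

Definition push : prob M' :=
  {| pr := push_fun; pr_out := push_out; pr_ge0 := push_ge0;
     pr_T := push_T; pr_add := push_add |}.
End Push.

Definition push_set (M M' : MSpace) (f : carrier M -> carrier M')
  (hf : forall B, meas M' B -> meas M (preim f B)) (X : prob M -> Prop) : prob M' -> Prop :=
  fun Q => exists P, X P /\ Q = @push M M' f hf P.

Definition P2 (Upd : UpdFamily) : Prop :=
  forall (M M' : MSpace) (f : carrier M -> carrier M')
    (fsurj : forall w', exists w, f w = w')
    (hf : forall B, meas M' B -> meas M (preim f B))
    (X : prob M -> Prop) (B : carrier M' -> Prop), meas M' B ->
    set_eq (Upd M' (@push_set M M' f hf X) B) (@push_set M M' f hf (Upd M X (preim f B))).

(* Main.v *)
Require Import Defs.
From Stdlib Require Import Reals Lra Classical ClassicalEpsilon FunctionalExtensionality PropExtensionality ProofIrrelevance.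
Open Scope R_scope.

Lemma set_ext {T} (A B : T -> Prop) : (forall w, A w <-> B w) -> A = B.
Proof. intros h; apply functional_extensionality; intros w; apply propositional_extensionality; auto. Qed.

Definition E0 {T : Type} : T -> Prop := fun _ => ~ True.

Lemma meas_E0 (M : MSpace) : meas M E0.
Proof. apply (meas_C M (fun _ => True)), meas_T. Qed.

Lemma pr_E0 (M : MSpace) (P : prob M) : pr P E0 = 0.
Proof.
  assert (h := pr_add P E0 E0 (meas_E0 M) (meas_E0 M)).
  replace (fun w => E0 w \/ E0 w) with (@E0 (carrier M)) in h.
  - assert (pr P E0 = pr P E0 + pr P E0) by (apply h; unfold E0; tauto). lra.
  - apply set_ext; unfold E0; tauto.
Qed.

Lemma pr_compl (M : MSpace) (P : prob M) B : meas M B -> pr P (fun w => ~ B w) = 1 - pr P B.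
Proof.
  intros hB. assert (h := pr_add P B (fun w => ~ B w) hB (meas_C M B hB)).
  assert (e : (fun w => B w \/ ~ B w) = (fun _ : carrier M => True)).
  { apply set_ext; intros w; split; auto; intros; apply classic. }
  assert (h2 : pr P (fun w => B w \/ ~ B w) = pr P B + pr P (fun w => ~ B w)) by (apply h; tauto).
  rewrite e, (pr_T P) in h2. lra.
Qed.

Definition Two : MSpace :=
  {| carrier := bool; meas := fun _ => True; meas_T := I;
     meas_C := fun _ _ => I; meas_U := fun _ _ _ _ => I |}.

Definition fB (M : MSpace) (B : carrier M -> Prop) (w : carrier M) : bool :=
  if excluded_middle_informative (B w) then true else false.

Lemma fB_true M B w : fB M B w = true <-> B w.
Proof. unfold fB; destruct excluded_middle_informative; split; intros; auto; discriminate || tauto. Qed.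

Lemma fB_false M B w : fB M B w = false <-> ~ B w.
Proof. unfold fB; destruct excluded_middle_informative; split; intros; auto; discriminate || tauto. Qed.

Lemma preim_cases M B (A : carrier Two -> Prop) :
  (A true -> A false -> preim (fB M B) A = fun _ => True) /\
  (A true -> ~ A false -> preim (fB M B) A = B) /\
  (~ A true -> A false -> preim (fB M B) A = fun w => ~ B w) /\
  (~ A true -> ~ A false -> preim (fB M B) A = E0).
Proof.
  unfold preim; repeat split; intros h1 h2; apply set_ext; intros w;
  destruct (fB M B w) eqn:e;
  first [apply fB_true in e | apply fB_false in e]; unfold E0; tauto.
Qed.

Lemma hfB M B : meas M B -> forall A, meas Two A -> meas M (preim (fB M B) A).
Proof.
  intros hB A _. destruct (preim_cases M B A) as [c1 [c2 [c3 c4]]].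
  destruct (classic (A true)), (classic (A false)).
  - rewrite c1; auto; apply meas_T.
  - rewrite c2; auto.
  - rewrite c3; auto; apply meas_C; auto.
  - rewrite c4; auto; apply meas_E0.
Qed.

Lemma fB_surj M B (x y : carrier M) : B x -> ~ B y -> forall w', exists w, fB M B w = w'.
Proof. intros hx hy [|]; [exists x; apply fB_true | exists y; apply fB_false]; auto. Qed.

Definition g (alpha : R) (A : bool -> Prop) : R :=
  (if excluded_middle_informative (A true) then alpha else 0) +
  (if excluded_middle_informative (A false) then 1 - alpha else 0).

Lemma push_val M B (hB : meas M B) (hf : forall A, meas Two A -> meas M (preim (fB M B) A))
  (P : prob M) A : pr (@push M Two (fB M B) hf P) A = g (pr P B) A.
Proof.
  simpl. unfold push_fun. destruct excluded_middle_informative as [_|n]; [|exfalso; apply n; exact I].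
  destruct (preim_cases M B A) as [c1 [c2 [c3 c4]]]. unfold g. unfold preim in *.
  destruct excluded_middle_informative as [a|a]; destruct excluded_middle_informative as [b|b].
  - rewrite c1; auto. rewrite (pr_T P); lra.
  - rewrite c2; auto; lra.
  - rewrite c3; auto. rewrite pr_compl; auto; lra.
  - rewrite c4; auto. rewrite pr_E0; lra.
Qed.

Lemma prob_eq M (p q : prob M) : (forall A, pr p A = pr q A) -> p = q.
Proof.
  destruct p as [p a b c d], q as [q a' b' c' d']; simpl; intros h.
  assert (p = q) by (apply functional_extensionality; auto). subst q.
  f_equal; apply proof_irrelevance.
Qed.

Lemma nonempty_parts M (P : prob M) B : meas M B -> 0 < pr P B < 1 ->
  (exists x, B x) /\ (exists y, ~ B y).
Proof.
  intros hB [h0 h1]. split.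
  - apply NNPP; intros hn. assert (B = E0).
    { apply set_ext; intros w; unfold E0; split; [intros hb; exfalso; apply hn; eauto | tauto]. }
    subst B; rewrite pr_E0 in h0; lra.
  - apply NNPP; intros hn. assert (B = fun _ => True).
    { apply set_ext; intros w; split; auto; intros; apply NNPP; intros hb; apply hn; eauto. }
    subst B; rewrite (pr_T P) in h1; lra.
Qed.

Theorem lemmaA1 (Upd : UpdFamily) (hUpd : is_update_family Upd) (hP2 : P2 Upd)
  (M : MSpace) (P : prob M) (B : carrier M -> Prop) (hB : meas M B)
  (alpha : R) (hPB : pr P B = alpha) (halpha : alpha < 1)
  (hempty : set_empty (Upd M (single P) B)) :
  forall (M' : MSpace) (P' : prob M') (B' : carrier M' -> Prop),
    meas M' B' -> pr P' B' = alpha -> set_empty (Upd M' (single P') B').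
Proof.
  intros M' P' B' hB' hPB'.
  assert (hge := pr_ge0 P' B' hB').
  destruct (Req_dec alpha 0) as [a0|a0].
  { apply hUpd; auto. intros Q hQ; unfold single in hQ; subst Q; lra. }
  destruct (nonempty_parts M P B hB) as [[x hx] [y hy]]; [lra|].
  destruct (nonempty_parts M' P' B' hB') as [[x' hx'] [y' hy']]; [lra|].
  set (hf := hfB M B hB). set (hf' := hfB M' B' hB').
  set (Bt := fun b : carrier Two => b = true).
  assert (e1 := hP2 M Two (fB M B) (fB_surj M B x y hx hy) hf (single P) Bt I).
  assert (e2 := hP2 M' Two (fB M' B') (fB_surj M' B' x' y' hx' hy') hf' (single P') Bt I).
  assert (pb : @preim (carrier M) (carrier Two) (fB M B) Bt = B) by (apply set_ext; intros w; apply fB_true).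
  assert (pb' : @preim (carrier M') (carrier Two) (fB M' B') Bt = B') by (apply set_ext; intros w; apply fB_true).
  rewrite pb in e1. rewrite pb' in e2.
  assert (eqp : @push_set M Two (fB M B) hf (single P) = @push_set M' Two (fB M' B') hf' (single P')).
  { apply set_ext; intros Q; unfold push_set, single; split;
    intros [R0 [-> ->]]; eexists; split; try reflexivity;
    apply prob_eq; intros A; rewrite !push_val; congruence. }
  rewrite eqp in e1.
  intros Q hQ.
  assert (h : @push_set M' Two (fB M' B') hf' (Upd M' (single P') B') (@push M' Two (fB M' B') hf' Q))
    by (exists Q; split; auto).
  apply e2, e1 in h. destruct h as [R0 [hR _]]. exact (hempty R0 hR).
Qed.
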